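(* Let $\{(x_i,w_i)\}_{i=1}^n$ be a set of strategies with proportions $x_i$ and fitnesses $w_i$, and let $\{(Y_j,W_j,c_j)\}_{j=1}^m$ be a set of compound strategies that factors $\{(x_i,w_i)\}_{i=1}^n$. Then the replicator system \[ \dot{x}_i = x_i(w_i - \langle w \rangle), \qquad \langle w \rangle = \sum_{k=1}^n x_k w_k, \] and the nested system \[ \dot{Y}_j = Y_j(W_j - \langle W \rangle), \qquad \dot{y}_{ij} = y_{ij}(w_i - \langle w \rangle_j), \] where $\langle W \rangle = \sum_{k=1}^m Y_k W_k$ and $\langle w \rangle_j = \sum_{k=1}^n y_{kj} w_k$, describe the same dynamics.
   Context: A compound strategy $(Y_j,W_j,c_j)$ of a set of strategies $\{(x_i,w_i)\}_{i=1}^n$ is defined by: a component function $c_j$ with $\sum_{i=1}^n c_j(i) = 1$; a weight $Y_j := \sum_{i=1}^n c_j(i) x_i$; a profile $y_{ij} = \frac{c_j(i) x_i}{Y_j}$; and a fitness $W_j = \sum_{i=1}^n y_{ij} w_i$. A set of compound strategies $\{(Y_j,W_j,c_j)\}_{j=1}^m$ factors a set of strategies $\{(x_i,w_i)\}_{i=1}^n$, with $x_i = \sum_{j: c_j(i)\neq 0} \frac{y_{ij} Y_j}{c_j(i)}$, if for all $1 \le i \le n$, $\sum_{j=1}^m c_j(i) = 1$. *)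

(* Defs.v *)
From HB Require Import structures.
From mathcomp Require Import all_boot all_order all_algebra.
From mathcomp Require Import all_classical all_reals all_analysis.
Set Implicit Arguments. Unset Strict Implicit. Unset Printing Implicit Defensive.
Import Order.TTheory GRing.Theory Num.Theory.
Local Open Scope ring_scope.

Section Compound.
Variables (R : realType) (n m : nat).
(* c j i = c_j(i) : component functions (constant in time)
   x i t = x_i(t) : proportion of strategy i at time t
   w i t = w_i(t) : fitness of strategy i at time t *)
Variables (c : 'I_m -> 'I_n -> R) (x w : 'I_n -> R -> R).

Definition is_component (j : 'I_m) : Prop := \sum_(i < n) c j i = 1.

Definition factors : Prop := forall i : 'I_n, \sum_(j < m) c j i = 1.

Definition Yw (j : 'I_m) (t : R) : R := \sum_(i < n) c j i * x i t.

Definition prof (i : 'I_n) (j : 'I_m) (t : R) : R := c j i * x i t / Yw j t.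

Definition Wf (j : 'I_m) (t : R) : R := \sum_(i < n) prof i j t * w i t.

Definition mean_w (t : R) : R := \sum_(k < n) x k t * w k t.

Definition mean_W (t : R) : R := \sum_(k < m) Yw k t * Wf k t.

Definition mean_wj (j : 'I_m) (t : R) : R := \sum_(k < n) prof k j t * w k t.

Definition replicator_at (t : R) : Prop :=
  forall i : 'I_n, is_derive t 1 (x i) (x i t * (w i t - mean_w t)).

Definition nested_at (t : R) : Prop :=
  (forall j : 'I_m, is_derive t 1 (Yw j) (Yw j t * (Wf j t - mean_W t))) /\
  (forall (i : 'I_n) (j : 'I_m),
      is_derive t 1 (prof i j) (prof i j t * (w i t - mean_wj j t))).

End Compound.

(* Main.v *)
Require Import Defs.
From HB Require Import structures.
From mathcomp Require Import all_boot all_order all_algebra.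
From mathcomp Require Import all_classical all_reals all_analysis.
From mathcomp Require Import ring.
Import Order.TTheory GRing.Theory Num.Theory.
Local Open Scope ring_scope.

Section H.
Variables (R : realType) (n m : nat)
  (c : 'I_m -> 'I_n -> R) (x w : 'I_n -> R -> R) (t : R).
Hypothesis dx : forall i, derivable (x i) t 1.
Let d i := 'D_1 (x i) t.

Lemma dY j : is_derive t 1 (Yw c x j) (\sum_(i < n) c j i * d i).
Proof.
have -> : Yw c x j = \sum_(i < n) (fun s => c j i * x i s).
  by apply/funext => s; rewrite /Yw fct_sumE.
apply: is_derive_sum => i.
have -> : (fun s => c j i * x i s) = c j i \*: x i by [].
have := is_deriveZ (c j i) (derivableP (dx i)).
by [].
Qed.

Lemma dP i j : Yw c x j t != 0 -> is_derive t 1 (prof c x i j)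
  (c j i * x i t * (- (Yw c x j t) ^- 2 * \sum_(k < n) c j k * d k)
   + (Yw c x j t)^-1 * (c j i * d i)).
Proof.
move=> Y0.
have -> : prof c x i j = (fun s => c j i * x i s) * (fun s => (Yw c x j s)^-1).
  by apply/funext => s.
have H1 : is_derive t 1 (fun s => c j i * x i s) (c j i * d i).
  have := is_deriveZ (c j i) (derivableP (dx i)); exact.
have := is_deriveM H1 (is_deriveV Y0 (dY j)).
move/is_derive_eq; apply.
rewrite /= addrC; congr (_ + _).
Qed.
End H.

Lemma dval {R : realType} {a v : R} {f : R -> R} {df} : is_derive a v f df -> 'D_v f a = df.
Proof. by case. Qed.

Lemma YWeq (R : realType) (n m : nat) (c : 'I_m -> 'I_n -> R) (x w : 'I_n -> R -> R) t j :
  Yw c x j t != 0 -> Yw c x j t * Wf c x w j t = \sum_(i < n) c j i * x i t * w i t.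
Proof.
move=> Y0; rewrite /Wf mulr_sumr; apply: eq_bigr => i _; rewrite /prof; field; exact: Y0.
Qed.

Lemma mWeq (R : realType) (n m : nat) (c : 'I_m -> 'I_n -> R) (x w : 'I_n -> R -> R) t :
  factors c -> (forall j, Yw c x j t != 0) -> mean_W c x w t = mean_w x w t.
Proof.
move=> fc Y0; rewrite /mean_W.
under eq_bigr => j _ do rewrite YWeq //.
rewrite exchange_big /mean_w; apply: eq_bigr => i _.
transitivity (\sum_j c j i * (x i t * w i t)); first by apply: eq_bigr => j _; ring.
by rewrite -mulr_suml fc mul1r.
Qed.

Theorem mainTheorem1 (R : realType) (n m : nat)
  (c : 'I_m -> 'I_n -> R) (x w : 'I_n -> R -> R) (D : set R) :
  (forall j : 'I_m, is_component c j) ->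
  factors c ->
  (forall t, D t -> forall i : 'I_n, derivable (x i) t 1) ->
  (forall t, D t -> forall j : 'I_m, Yw c x j t != 0) ->
  ((forall t, D t -> replicator_at x w t) <->
   (forall t, D t -> nested_at c x w t)).
Proof.
move=> _ fc dx Y0; split.
- move=> Hr t Dt.
  have Hd i : 'D_1 (x i) t = x i t * (w i t - mean_w x w t) := dval (Hr t Dt i).
  have mW := @mWeq R n m c x w t fc (Y0 t Dt).
  have HS j : \sum_(k < n) c j k * 'D_1 (x k) t = Yw c x j t * (Wf c x w j t - mean_W c x w t).
    rewrite mW mulrBr YWeq ?Y0 //.
    under eq_bigr => k _ do rewrite Hd.
    rewrite /Yw mulr_suml -sumrB; apply: eq_bigr => k _; ring.
  split.
  + move=> j; move: (@dY R n m c x t (dx t Dt) j); move/is_derive_eq; apply; exact: HS.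
  + move=> i j; move: (@dP R n m c x t (dx t Dt) i j (Y0 t Dt j)); move/is_derive_eq; apply.
    rewrite HS mW Hd /prof /mean_wj -/(Wf c x w j t); field; exact: Y0.
- move=> Hn t Dt; case: (Hn t Dt) => HY HP.
  have mW := @mWeq R n m c x w t fc (Y0 t Dt).
  have HS j : \sum_(k < n) c j k * 'D_1 (x k) t = Yw c x j t * (Wf c x w j t - mean_W c x w t).
    by rewrite -(dval (HY j)) (dval (@dY R n m c x t (dx t Dt) j)).
  have E i j : c j i * 'D_1 (x i) t = c j i * x i t * (w i t - mean_W c x w t).
    have h := dval (HP i j).
    rewrite (dval (@dP R n m c x t (dx t Dt) i j (Y0 t Dt j))) HS in h.
    have Y := Y0 t Dt j.
    apply: (mulfI (invr_neq0 Y)).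
    apply: (addrI (c j i * x i t * (- Yw c x j t ^- 2 * (Yw c x j t * (Wf c x w j t - mean_W c x w t))))).
    rewrite h /prof /mean_wj -/(Wf c x w j t); field; exact: Y.
  move=> i; move: (derivableP (dx t Dt i)); move/is_derive_eq; apply.
  rewrite -mW.
  transitivity (\sum_j c j i * 'D_1 (x i) t).
    by rewrite -mulr_suml fc mul1r.
  under eq_bigr => j _ do rewrite E.
  transitivity (\sum_j c j i * (x i t * (w i t - mean_W c x w t))).
    by apply: eq_bigr => j _; ring.
  by rewrite -mulr_suml fc mul1r.
Qed.
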